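(* A collective choice problem $\mathcal C$ is Finitely Approximable if and only if it satisfies Thin Individual Indifference.
   Context: Collective choice problem $\mathcal C$: players $i\in N\cup\{A\}$ (voters $N$ and agenda setter $A$) with complete, transitive, continuous preferences $\succsim_i$ on a compact metrizable policy space $X$ with metric $d$. $d(x,B)=\inf_{y\in B}d(x,y)$. A generic $\epsilon$-grid is a finite set $X_\epsilon\subseteq X$ with $\max_{x\in X}d(x,X_\epsilon)<\epsilon$ such that every player's preference is antisymmetric on $X_\epsilon$. $\mathcal C$ is Finitely Approximable if for every $x\in X$ and $\epsilon>0$ there is a generic $\epsilon$-grid containing $x$. With $I_i(x)=\{y\in X: y\sim_i x\}$, $\mathcal C$ satisfies Thin Individual Indifference if $I_i(x)\setminus\{x\}$ has empty interior for every player $i$ and every $x\in X$. *)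

(* Defs.v *)
From Stdlib Require Import Reals List.
Open Scope R_scope.

Definition is_metric {X : Type} (d : X -> X -> R) : Prop :=
  (forall x y, 0 <= d x y) /\
  (forall x y, d x y = 0 <-> x = y) /\
  (forall x y, d x y = d y x) /\
  (forall x y z, d x z <= d x y + d y z).

Definition ball {X : Type} (d : X -> X -> R) (x : X) (r : R) : X -> Prop :=
  fun y => d x y < r.

Definition open_set {X : Type} (d : X -> X -> R) (U : X -> Prop) : Prop :=
  forall x, U x -> exists r, 0 < r /\ forall y, ball d x r y -> U y.

Definition closed_set {X : Type} (d : X -> X -> R) (F : X -> Prop) : Prop :=
  open_set d (fun x => ~ F x).

Definition interior {X : Type} (d : X -> X -> R) (S : X -> Prop) : X -> Prop :=
  fun y => exists U, open_set d U /\ U y /\ forall z, U z -> S z.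

Definition compact_space {X : Type} (d : X -> X -> R) : Prop :=
  forall (J : Type) (U : J -> X -> Prop),
    (forall j, open_set d (U j)) ->
    (forall x, exists j, U j x) ->
    exists js : list J, forall x, exists j, In j js /\ U j x.

(** Weak preference relations: [pref x y] means x ≿ y *)
Definition complete_pref {X : Type} (pref : X -> X -> Prop) : Prop :=
  forall x y, pref x y \/ pref y x.

Definition transitive_pref {X : Type} (pref : X -> X -> Prop) : Prop :=
  forall x y z, pref x y -> pref y z -> pref x z.

Definition continuous_pref {X : Type} (d : X -> X -> R) (pref : X -> X -> Prop) : Prop :=
  forall x, closed_set d (fun y => pref y x) /\ closed_set d (fun y => pref x y).

Definition indiff {X : Type} (pref : X -> X -> Prop) (x : X) : X -> Prop :=
  fun y => pref y x /\ pref x y.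

(** Collective choice problem: voters N (a finite set), agenda setter A.
    Players are [option N]: [Some v] is voter v, [None] is the agenda setter A. *)
Definition collective_choice_problem {N : Type} {X : Type}
    (d : X -> X -> R) (pref : option N -> X -> X -> Prop) : Prop :=
  is_metric d /\ compact_space d /\
  forall i, complete_pref (pref i) /\ transitive_pref (pref i) /\
            continuous_pref d (pref i).

(** max_{x in X} d(x, G) < eps, for a finite set G (a list):
    there is a bound M < eps with d(x,G) <= M for all x. *)
Definition grid_fine {X : Type} (d : X -> X -> R) (G : list X) (eps : R) : Prop :=
  exists M, M < eps /\ forall x, exists y, In y G /\ d x y <= M.

Definition generic_on {N X : Type} (pref : option N -> X -> X -> Prop) (G : list X) : Prop :=
  forall i x y, In x G -> In y G -> pref i x y -> pref i y x -> x = y.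

Definition generic_grid {N X : Type} (d : X -> X -> R)
    (pref : option N -> X -> X -> Prop) (G : list X) (eps : R) : Prop :=
  grid_fine d G eps /\ generic_on pref G.

Definition finitely_approximable {N X : Type} (d : X -> X -> R)
    (pref : option N -> X -> X -> Prop) : Prop :=
  forall x eps, 0 < eps -> exists G, generic_grid d pref G eps /\ In x G.

Definition thin_individual_indifference {N X : Type} (d : X -> X -> R)
    (pref : option N -> X -> X -> Prop) : Prop :=
  forall i x y, ~ interior d (fun z => indiff (pref i) x z /\ z <> x) y.

(* Main.v *)
Require Import Defs.
From Stdlib Require Import Reals List Lra Classical.
Require Import Defs.
Open Scope R_scope.

Lemma open_inter {X : Type} (d : X -> X -> R) (U V : X -> Prop) :
  open_set d U -> open_set d V -> open_set d (fun x => U x /\ V x).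
Proof.
  intros HU HV x [Ux Vx].
  destruct (HU x Ux) as [r1 [Hr1 H1]]. destruct (HV x Vx) as [r2 [Hr2 H2]].
  exists (Rmin r1 r2). split. apply Rmin_pos; auto.
  intros y Hy; unfold ball in *; split.
  - apply H1; unfold ball; eapply Rlt_le_trans; [exact Hy| apply Rmin_l].
  - apply H2; unfold ball; eapply Rlt_le_trans; [exact Hy| apply Rmin_r].
Qed.

Lemma open_neq {X : Type} (d : X -> X -> R) (g : X) :
  is_metric d -> open_set d (fun y => y <> g).
Proof.
  intros [Hnn [Hz [Hs Ht]]] y Hy. exists (d g y). split.
  - destruct (Rle_lt_or_eq_dec 0 (d g y) (Hnn g y)) as [H|H]; auto.
    exfalso; apply Hy; symmetry; apply Hz; auto.
  - intros w Hw Heq; subst w; unfold ball in Hw; rewrite Hs in Hw; lra.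
Qed.

Lemma open_ball {X : Type} (d : X -> X -> R) (p : X) (r : R) :
  is_metric d -> open_set d (ball d p r).
Proof.
  intros [Hnn [Hz [Hs Ht]]] y Hy. unfold ball in *. exists (r - d p y). split. lra.
  intros w Hw. unfold ball in *. pose proof (Ht p y w). lra.
Qed.

Lemma open_notC {X : Type} (d : X -> X -> R) (P : X -> X -> Prop) (g : X) :
  continuous_pref d P -> open_set d (fun w => ~ (P w g /\ P g w)).
Proof.
  intros Hc w Hw. apply not_and_or in Hw. destruct (Hc g) as [H1 H2].
  destruct Hw as [H|H].
  - destruct (H1 w H) as [r [Hr Hb]]. exists r; split; auto.
    intros y Hy [Ha _]. exact (Hb y Hy Ha).
  - destruct (H2 w H) as [r [Hr Hb]]. exists r; split; auto.
    intros y Hy [_ Ha]. exact (Hb y Hy Ha).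
Qed.

Lemma avoid {N X : Type} (d : X -> X -> R) (pref : option N -> X -> X -> Prop) :
  is_metric d -> (forall i, continuous_pref d (pref i)) ->
  thin_individual_indifference d pref ->
  forall L : list (option N * X), forall V, open_set d V -> (exists w, V w) ->
  exists z, V z /\ forall i g, In (i, g) L -> ~ (pref i z g /\ pref i g z) \/ z = g.
Proof.
  intros Hm Hc TII L. induction L as [|[i g] L IH]; intros V HV [w Hw].
  - exists w; split; [exact Hw|]. intros i g [].
  - destruct (classic (exists w', V w' /\ ~ (pref i w' g /\ pref i g w')))
      as [[w' [Hw'1 Hw'2]] | Hno].
    + destruct (IH (fun y => V y /\ ~ (pref i y g /\ pref i g y))) as [z [[Vz Cz] Hz]].
      * apply open_inter; auto. apply open_notC; auto.
      * exists w'; auto.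
      * exists z; split; auto. intros i0 g0 [Heq|Hin].
        -- inversion Heq; subst; left; auto.
        -- apply Hz; auto.
    + assert (Hall : forall y, V y -> y = g).
      { intros y Vy. apply NNPP; intro Hne. apply (TII i g y).
        exists (fun z => V z /\ z <> g). split; [|split; auto].
        - apply open_inter; auto. apply open_neq; auto.
        - intros z [Vz Hz]. split; auto. unfold indiff.
          apply NNPP; intro Hc'; apply Hno; exists z; split; auto. }
      destruct (IH V HV (ex_intro _ w Hw)) as [z [Vz Hz]].
      exists z; split; auto. intros i0 g0 [Heq|Hin].
      * inversion Heq; subst. right; apply Hall; auto.
      * auto.
Qed.

Lemma generic_cons {N X : Type} (pref : option N -> X -> X -> Prop) (G : list X) (z : X) :
  generic_on pref G ->
  (forall i g, In g G -> ~ (pref i z g /\ pref i g z) \/ z = g) ->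
  generic_on pref (z :: G).
Proof.
  intros HG Hz i a b Ha Hb H1 H2.
  destruct Ha as [Ha|Ha]; destruct Hb as [Hb|Hb].
  - rewrite <- Ha, <- Hb; reflexivity.
  - rewrite <- Ha in *. destruct (Hz i b Hb) as [Hc|Hc]; auto.
    exfalso; apply Hc; split; auto.
  - rewrite <- Hb in *. destruct (Hz i a Ha) as [Hc|Hc]; auto.
    exfalso; apply Hc; split; auto.
  - exact (HG i a b Ha Hb H1 H2).
Qed.

Theorem lemma3 (N : Type) (HN : exists vs : list N, forall v, In v vs)
  (X : Type) (d : X -> X -> R) (pref : option N -> X -> X -> Prop) :
  collective_choice_problem d pref ->
  (finitely_approximable d pref <-> thin_individual_indifference d pref).
Proof.
  intros [Hm [Hcomp Hpref]].
  assert (Hc : forall i, continuous_pref d (pref i)) by (intro i; apply Hpref).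
  pose proof Hm as [Hnn [Hz [Hs Ht]]].
  split.
  - intros FA i x y [U [HU [Uy HUS]]].
    destruct (HU y Uy) as [r [Hr Hb]].
    destruct (FA x r Hr) as [G [[[M [HM HG]] Hgen] Hx]].
    destruct (HG y) as [z [Hzin Hdz]].
    destruct (HUS z) as [[H1 H2] Hne].
    { apply Hb. unfold ball. lra. }
    apply Hne. symmetry. exact (Hgen i x z Hx Hzin H2 H1).
  - intros TII x eps Heps.
    destruct HN as [vs Hvs].
    set (players := None :: map Some vs).
    assert (Hpl : forall i, In i players).
    { intros [v|]. right; apply in_map; auto. left; auto. }
    assert (build : forall js : list X, exists G, generic_on pref G /\ In x G /\
              forall p, In p js -> exists g, In g G /\ d p g < eps/4).
    { induction js as [|a js IH].
      - exists (x :: nil). split; [|split].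
        + intros i a b Ha Hb _ _. destruct Ha as [<-|[]]; destruct Hb as [<-|[]]; reflexivity.
        + left; auto.
        + intros p [].
      - destruct IH as [G [HG [Hx Hp]]].
        assert (Haa : d a a = 0) by (apply Hz; auto).
        destruct (avoid d pref Hm Hc TII (list_prod players G) (ball d a (eps/4))
                   (open_ball d a _ Hm)) as [z [Hza Hzc]].
        { exists a. unfold ball. lra. }
        exists (z :: G). split; [|split].
        + apply generic_cons; auto. intros i g Hg. apply Hzc. apply in_prod; auto.
        + right; auto.
        + intros p [<-|Hin].
          * exists z; split; [left; auto|]. exact Hza.
          * destruct (Hp p Hin) as [g [Hg Hd]]. exists g; split; [right|]; auto. }
    destruct (Hcomp X (fun j => ball d j (eps/2)) (fun j => open_ball d j _ Hm))
      as [js Hjs].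
    { intros y. exists y. unfold ball. assert (d y y = 0) by (apply Hz; auto). lra. }
    destruct (build js) as [G [HG [Hx HpG]]].
    exists G. split; [split|]; auto.
    exists (3 * eps / 4). split; [lra|].
    intros y. destruct (Hjs y) as [p [Hp Hyp]].
    destruct (HpG p Hp) as [g [Hg Hdg]]. exists g; split; auto.
    unfold ball in Hyp. pose proof (Ht y p g). rewrite (Hs y p) in *. lra.
Qed.
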